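(* Let $T$ be a strongly consistent $\mathcal{L}$-theory in $RGL^*$ and $\varphi,\psi$ $\mathcal{L}$-sentences. Then at least one of $T\cup\{\varphi\to\psi\}$ and $T\cup\{\psi\to\varphi\}$ is strongly consistent.
   Context: $\mathcal{L}$ is a first-order language with countably many predicate, function and constant symbols. Formulas of $RGL^*$ are built from atomic formulas and the nullary connectives $\bar r$ ($r\in[0,1]\cap\mathbb{Q}$, including $\bar0,\bar1$) by $\wedge,\to,\forall,\exists$; $\neg\varphi:=\varphi\to\bar1$, $\varphi\vee\psi:=((\varphi\to\psi)\to\psi)\wedge((\psi\to\varphi)\to\varphi)$, $\varphi\leftrightarrow\psi:=(\varphi\to\psi)\wedge(\psi\to\varphi)$. Proof system $\vdash$: all instances of (G1) $(\varphi\to\psi)\to((\psi\to\chi)\to(\varphi\to\chi))$; (G2) $(\varphi\wedge\psi)\to\varphi$; (G3) $(\varphi\wedge\psi)\to(\psi\wedge\varphi)$; (G4) $\varphi\to(\varphi\wedge\varphi)$; (G5) $(\varphi\to(\psi\to\chi))\leftrightarrow((\varphi\wedge\psi)\to\chi)$; (G6) $((\varphi\to\psi)\to\chi)\to(((\psi\to\varphi)\to\chi)\to\chi)$; (G7) $\bar1\to\varphi$; (G$\forall$1) $(\forall x\,\varphi(x))\to\varphi(t)$; (G$\forall$2) $\forall x(\psi\to\varphi(x))\to(\psi\to\forall x\,\varphi(x))$; (G$\forall$3) $\forall x(\psi\vee\varphi(x))\to(\psi\vee\forall x\,\varphi(x))$; (G$\exists$1) $\varphi(t)\to\exists x\,\varphi(x)$;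 (G$\exists$2) $\exists x(\psi\to\varphi(x))\to(\psi\to\exists x\,\varphi(x))$ (with $t$ substitutable for $x$ and $x$ not free in $\psi$); (RGL1) $(\bar r\wedge\bar s)\leftrightarrow\overline{\max\{r,s\}}$; (RGL2) $\bar r\to\bar s$ if $r\ge s$, $(\bar r\to\bar s)\leftrightarrow\bar s$ if $r<s$; (RGL3) $\neg\neg\bar r$ for $r<1$. Rules: modus ponens and generalization. A theory (set of sentences) $T$ is strongly consistent if $T\nvdash\bar r$ for every rational $r\in(0,1]$. *)

(* Defs.v *)
From HB Require Import structures.
From mathcomp Require Import all_boot all_order all_algebra.
From Stdlib Require Vector.
Set Implicit Arguments. Unset Strict Implicit. Unset Printing Implicit Defensive.
Import Order.TTheory GRing.Theory Num.Theory.
Local Open Scope ring_scope.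

Record signature := Signature {
  Psym : Type; Fsym : Type; Csym : Type;
  par : Psym -> nat; far : Fsym -> nat }.

Definition countable_sig (S : signature) : Prop :=
  (exists f : Psym S -> nat, injective f) /\
  (exists f : Fsym S -> nat, injective f) /\
  (exists f : Csym S -> nat, injective f).

Record unitQ := UnitQ { uq : rat; uq_in01 : (0 <= uq) && (uq <= 1) }.

Definition uq_zero : unitQ := @UnitQ 0 isT.
Definition uq_one : unitQ := @UnitQ 1 isT.

Section Syntax.
Variable S : signature.

(** Terms, with de Bruijn variables. *)
Inductive term : Type :=
| Var : nat -> term
| Cnst : Csym S -> term
| Func : forall f : Fsym S, Vector.t term (far f) -> term.
Arguments Func : clear implicits.

Inductive fml : Type :=
| Atom : forall p : Psym S, Vector.t term (par p) -> fml
| Tc : unitQ -> fml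
| And : fml -> fml -> fml
| Imp : fml -> fml -> fml
| All : fml -> fml               (* binds de Bruijn index 0 *)
| Ex : fml -> fml.
Arguments Atom : clear implicits.

Fixpoint tsubst (s : nat -> term) (t : term) : term :=
  match t with
  | Var n => s n
  | Cnst c => Cnst c
  | Func f v => Func f (Vector.map (tsubst s) v)
  end.

Definition up (s : nat -> term) : nat -> term :=
  fun n => match n with
           | 0 => Var 0
           | n'.+1 => tsubst (fun k => Var k.+1) (s n')
           end.

Fixpoint subst (s : nat -> term) (A : fml) : fml :=
  match A with
  | Atom p v => Atom p (Vector.map (tsubst s) v)
  | Tc r => Tc r
  | And A B => And (subst s A) (subst s B)
  | Imp A B => Imp (subst s A) (subst s B)
  | All A => All (subst (up s) A)
  | Ex A => Ex (subst (up s) A)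
  end.

(** lift: shift all free variables by one ("x not free in psi"). *)
Definition lift (A : fml) : fml := subst (fun k => Var k.+1) A.
Definition inst (A : fml) (t : term) : fml :=
  subst (fun n => match n with 0 => t | n'.+1 => Var n' end) A.

Fixpoint tclosed (n : nat) (t : term) : Prop :=
  match t with
  | Var k => (k < n)%N
  | Cnst _ => True
  | Func f v =>
      (fix go m (w : Vector.t term m) : Prop :=
         match w with
         | Vector.nil => True
         | Vector.cons x _ w' => tclosed n x /\ go _ w'
         end) _ v
  end.

Fixpoint closed (n : nat) (A : fml) : Prop :=
  match A with
  | Atom p v => Vector.Forall (tclosed n) v
  | Tc _ => True
  | And A B => closed n A /\ closed n B
  | Imp A B => closed n A /\ closed n B
  | All A => closed n.+1 A
  | Ex A => closed n.+1 A
  end.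

Definition sentence (A : fml) : Prop := closed 0 A.

Definition Neg (A : fml) : fml := Imp A (Tc uq_one).
Definition Or (A B : fml) : fml :=
  And (Imp (Imp A B) B) (Imp (Imp B A) A).
Definition Iff (A B : fml) : fml := And (Imp A B) (Imp B A).

Inductive axiom : fml -> Prop :=
| G1 A B C : axiom (Imp (Imp A B) (Imp (Imp B C) (Imp A C)))
| G2 A B : axiom (Imp (And A B) A)
| G3 A B : axiom (Imp (And A B) (And B A))
| G4 A : axiom (Imp A (And A A))
| G5 A B C : axiom (Iff (Imp A (Imp B C)) (Imp (And A B) C))
| G6 A B C : axiom (Imp (Imp (Imp A B) C) (Imp (Imp (Imp B A) C) C))
| G7 A : axiom (Imp (Tc uq_one) A)
| GAll1 A t : axiom (Imp (All A) (inst A t))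
| GAll2 B A : axiom (Imp (All (Imp (lift B) A)) (Imp B (All A)))
| GAll3 B A : axiom (Imp (All (Or (lift B) A)) (Or B (All A)))
| GEx1 A t : axiom (Imp (inst A t) (Ex A))
| GEx2 B A : axiom (Imp (Ex (Imp (lift B) A)) (Imp B (Ex A)))
| RGL1 r s m : uq m = Num.max (uq r) (uq s) ->
    axiom (Iff (And (Tc r) (Tc s)) (Tc m))
| RGL2a r s : uq s <= uq r -> axiom (Imp (Tc r) (Tc s))
| RGL2b r s : uq r < uq s -> axiom (Iff (Imp (Tc r) (Tc s)) (Tc s))
| RGL3 r : uq r < 1 -> axiom (Neg (Neg (Tc r))).

Inductive prv (T : fml -> Prop) : fml -> Prop :=
| prv_ax A : axiom A -> prv T A
| prv_hyp A : T A -> prv T A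
| prv_mp A B : prv T A -> prv T (Imp A B) -> prv T B
| prv_gen A : prv T A -> prv T (All A).

Definition theory (T : fml -> Prop) : Prop := forall A, T A -> sentence A.

Definition strongly_consistent (T : fml -> Prop) : Prop :=
  forall r : unitQ, 0 < uq r -> ~ prv T (Tc r).

Definition add_ax (T : fml -> Prop) (A : fml) : fml -> Prop :=
  fun B => T B \/ B = A.

End Syntax.

(* Main.v *)
Require Import Defs.
From mathcomp Require Import all_boot all_order all_algebra.
From Stdlib Require Import Classical.
Import Order.TTheory GRing.Theory Num.Theory.

Section Aux.
Local Set Implicit Arguments.
Local Unset Strict Implicit.
Variable S : signature.

Lemma tsubst_id : forall (t : term S) n s,
  (forall k, (k < n)%N -> s k = Var S k) -> tclosed n t -> tsubst s t = t.
Proof.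
fix IH 1. intros [k|c|f v] n s Hs Hc; simpl in *.
- by apply: Hs.
- reflexivity.
- f_equal. revert Hc. generalize (far f) v.
  fix go 2. intros m w. destruct w as [|x m' w'].
  + reflexivity.
  + intros [H1 H2]. simpl. f_equal.
    * exact (IH x n s Hs H1).
    * exact (go m' w' H2).
Qed.

Lemma subst_id : forall (A : fml S) n s,
  (forall k, (k < n)%N -> s k = Var S k) -> Defs.closed n A -> subst s A = A.
Proof.
induction A as [p v|r|A IHA B IHB|A IHA B IHB|A IHA|A IHA]; intros n s Hs Hc;
  simpl in *.
- f_equal. induction Hc as [|m x w Hx Hw IHw]; first reflexivity.
  simpl. f_equal; last exact IHw. exact (tsubst_id Hs Hx).
- reflexivity.
- by destruct Hc; rewrite (IHA n s) // (IHB n s).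
- by destruct Hc; rewrite (IHA n s) // (IHB n s).
- rewrite (IHA n.+1) //. move=> [|k] Hk //=. by rewrite Hs.
- rewrite (IHA n.+1) //. move=> [|k] Hk //=. by rewrite Hs.
Qed.

Lemma lift_id (A : fml S) : sentence A -> Defs.lift A = A.
Proof. move=> H. by apply: (subst_id (n:=0)). Qed.

Variable U : fml S -> Prop.

Lemma mp2 A B : prv U A -> prv U (Imp A B) -> prv U B.
Proof. exact: prv_mp. Qed.

Lemma and_l A B : prv U (And A B) -> prv U A.
Proof. move=> H. apply: (mp2 H). apply: prv_ax. constructor. Qed.

Lemma and_r A B : prv U (And A B) -> prv U B.
Proof.
move=> H. apply: (@and_l B A). apply: (mp2 H). apply: prv_ax. constructor.
Qed.

Lemma comp A B C : prv U (Imp A B) -> prv U (Imp B C) -> prv U (Imp A C).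
Proof.
move=> H1 H2. apply: (mp2 H2). apply: (mp2 H1). apply: prv_ax. constructor.
Qed.

Lemma curry A B C : prv U (Imp (And A B) C) -> prv U (Imp A (Imp B C)).
Proof.
move=> H. apply: (mp2 H). apply: and_r. apply: prv_ax. exact: (G5 A B C).
Qed.

Lemma uncurry A B C : prv U (Imp A (Imp B C)) -> prv U (Imp (And A B) C).
Proof.
move=> H. apply: (mp2 H). apply: and_l. apply: prv_ax. exact: (G5 A B C).
Qed.

Lemma swap A B C : prv U (Imp A (Imp B C)) -> prv U (Imp B (Imp A C)).
Proof.
move=> H. apply: curry. apply: (comp (B := And A B)).
  apply: prv_ax; constructor.
exact: uncurry.
Qed.

Lemma Kthm A B : prv U (Imp A (Imp B A)).
Proof. apply: curry. apply: prv_ax; constructor. Qed.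

Lemma Ithm A : prv U (Imp A A).
Proof. apply: (comp (B := And A A)); apply: prv_ax; constructor. Qed.

End Aux.

Lemma deduction (S : signature) (T : fml S -> Prop) A B :
  sentence A -> prv (add_ax T A) B -> prv T (Imp A B).
Proof.
move=> HA; elim => {B}.
- move=> B HB. apply: (mp2 (A := B)); first exact: prv_ax. exact: Kthm.
- move=> B [HB|->]; last exact: Ithm.
  apply: (mp2 (A := B)); first exact: prv_hyp. exact: Kthm.
- move=> B C _ H1 _ H2.
  have H3 := swap H2.
  have H4 : prv T (Imp A (Imp A C)) := comp H1 H3.
  apply: (comp (B := And A A)); first by apply: prv_ax; constructor.
  exact: uncurry.
- move=> B _ H. have H1 := prv_gen H.
  rewrite -{1}(lift_id HA) in H1.
  apply: (mp2 H1). apply: prv_ax. constructor.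
Qed.

Theorem mainTheorem6 (S : signature) (HS : countable_sig S)
  (T : fml S -> Prop) (HT : theory T) (phi psi : fml S)
  (Hphi : sentence phi) (Hpsi : sentence psi) :
  strongly_consistent T ->
  strongly_consistent (add_ax T (Imp phi psi)) \/
  strongly_consistent (add_ax T (Imp psi phi)).
Proof.
move=> HC.
case: (Classical_Prop.classic (strongly_consistent (add_ax T (Imp phi psi)))) => H1;
  first by left.
case: (Classical_Prop.classic (strongly_consistent (add_ax T (Imp psi phi)))) => H2;
  first by right.
exfalso.
have [r [Hr Pr]] : exists r : unitQ, (0 < uq r)%R /\ prv (add_ax T (Imp phi psi)) (Tc S r).
  apply: Classical_Prop.NNPP => Hn; apply: H1 => r Hr Hp; apply: Hn; by exists r.
have [s [Hs Ps]] : exists r : unitQ, (0 < uq r)%R /\ prv (add_ax T (Imp psi phi)) (Tc S r).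
  apply: Classical_Prop.NNPP => Hn; apply: H2 => r' Hr' Hp; apply: Hn; by exists r'.
have Hsent : forall A B : fml S, sentence A -> sentence B -> sentence (Imp A B).
  by move=> A B HA HB; split.
have D1 := deduction S T _ _ (Hsent _ _ Hphi Hpsi) Pr.
have D2 := deduction S T _ _ (Hsent _ _ Hpsi Hphi) Ps.
set t := if (uq r <= uq s)%R then r else s.
have Ht : (0 < uq t)%R by rewrite /t; case: ifP.
have Htr : (uq t <= uq r)%R by rewrite /t; case: ifP => // /negbT; rewrite -ltNge => /ltW.
have Hts : (uq t <= uq s)%R by rewrite /t; case: ifP.
have E1 : prv T (Imp (Imp phi psi) (Tc S t)).
  apply: (comp D1). apply: prv_ax. exact: RGL2a.
have E2 : prv T (Imp (Imp psi phi) (Tc S t)).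
  apply: (comp D2). apply: prv_ax. exact: RGL2a.
apply: (HC t Ht). apply: (mp2 E2). apply: (mp2 E1). apply: prv_ax. constructor.
Qed.
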